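(* Let $Q$ be a groupoid quantale with base locale $A$ and let $X$ be a principal $Q$-locale over a locale $M$. Then $X$ is a fully open principal $G$-bundle over $M$, where $G=\mathcal G(Q)$ is the open groupoid of $Q$ (with anchor $p$ given by $p^*(a)=a\triangleright1_X$, action $a_X$ with $a_X^*(x)=\bigvee_{q\cdot y\le x}q\otimes y$, and bundle map $\pi:X\to M$ the open surjection whose direct image is $\tilde\varsigma$).
   Context: Let $A$ be a locale. A groupoid quantale $Q$ (base locale $A$) is an involutive quantale which is an $A$-$A$-bimodule (actions $a\triangleright q$, $q\triangleleft a$) with $(a\triangleright x)y=a\triangleright(xy)$, $(x\triangleleft a)y=x(a\triangleright y)$, $(xy)\triangleleft a=x(y\triangleleft a)$, $(a\triangleright x\triangleleft b)^*=b\triangleright x^*\triangleleft a$; a frame with $(a\triangleright q)\wedge m=a\triangleright(q\wedge m)$, $m\wedge(q\triangleleft a)=(q\wedge m)\triangleleft a$; equipped with a sup-lattice homomorphism $\varsigma_Q:Q\to A$ with $\varsigma_Q(1_Q)=1_A$, $\varsigma_Q(x)\triangleright y\le xx^*y$, $\varsigma_Q(x)\triangleright x=x$, $\varsigma_Q(a\triangleright x)=a\wedge\varsigma_Q(x)$, and a frame homomorphism $\upsilon:Q\to A$ with $\upsilon(a\triangleright1_Q)=a=\upsilon(1_Q\triangleleft a)$; the right adjoint of $Q\otimes_AQ\to Q$ preserves joins; $\bigvee_{xy\le a}\upsilon(x)\triangleright y=a$, $\upsilon(a)\triangleright1_Q=\bigvee_{xx^*\le a}x$. Its open groupoid $G=\mathcal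 G(Q)$ has $\mathcal O(G_1)=Q$, $\mathcal O(G_0)=A$, $d^*(a)=a\triangleright1_Q$, $r^*(a)=1_Q\triangleleft a$, $d_!=\varsigma_Q$, $u^*=\upsilon$, with quantale $\mathcal O(G)=Q$. A $Q$-module is a locale $X$ with a left $Q$-action $q\cdot x$ and unital left $A$-module structure $a\triangleright x$ with $(a\triangleright q)\cdot x=a\triangleright(q\cdot x)$, $(q\triangleleft a)\cdot x=q\cdot(a\triangleright x)$, $a\triangleright(x\wedge y)=(a\triangleright x)\wedge y$. A pre-Hilbert $Q$-module has $\langle-,-\rangle:X\times X\to Q$ with $\langle q\cdot x,y\rangle=q\langle x,y\rangle$, $a\triangleright\langle x,1_X\rangle=\langle a\triangleright x,1_X\rangle$, $\langle\bigvee x_\alpha,y\rangle=\bigvee\langle x_\alpha,y\rangle$, $\langle x,y\rangle=\langle y,x\rangle^*$. A stably supported $Q$-module has in addition a monotone $\varsigma_X:X\to A$ with $\varsigma_X(1_X)=1_A$, $\varsigma_X(x)\triangleright1_X\le\langle x,x\rangle\cdot1_X$, $\varsigma_X(x)\triangleright x=x$, $\varsigma_X(q\cdot x)\le\varsigma_Q(q)$. With $Q\otimes_AX$ the quotient of $Q\otimes X$ by $(q\triangleleft a)\otimes x=q\otimes(a\triangleright x)$, a $Q$-locale is a stably supported $Q$-module such that $\alpha_*:X\to Q\otimes_AX$, $\alpha_*(x)=\bigvee_{q\cdot y\le x}q\otimes y$, preserves joins, and $\bigvee_{q\cdot y\le x}\upsilon(q)\triangleright y=x$ for all $x$. A principal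 $Q$-locale over a locale $M$ is a $Q$-locale $X$ such that (P1) $X$ is an open $M$-locale, i.e. there is an open map of locales $\pi:X\to M$, with direct image $\tilde\varsigma=\pi_!$ satisfying $\tilde\varsigma(1_X)=1_M$; (P2) $\tilde\varsigma(q\cdot x)=\tilde\varsigma(\varsigma_Q(q^* )\triangleright x)$ for all $q\in Q$, $x\in X$; (P3) the map $\varphi:X\otimes_MX\to Q\otimes_AX$, $\varphi(x\otimes y)=\bigvee_{q\cdot z\le x}q\otimes(z\wedge y)$, is a frame isomorphism. For an open groupoid $G$, a $G$-locale is a locale $X$ with anchor $p:X\to G_0$ and associative unital action $a:G_1\times_{G_0}X\to X$ with $p\circ a=r\circ\pi_1$. A principal $G$-bundle over $M$ is a $G$-locale with $\pi:X\to M$, $\pi\circ a=\pi\circ\pi_2$, $\langle a,\pi_2\rangle:G_1\times_{G_0}X\to X\times_MX$ an isomorphism and $\pi$ an open surjection; it is fully open if moreover $p$ is an open surjection. *)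

(* Defs.v *)
(* Frames/locales, quantale modules and the
   tensor products Q (x)_A X, X (x)_M X, Q (x)_A Q, Q (x)_A Q (x)_A X are
   developed concretely: a tensor element is represented as a "bimorphic"
   down-set of pairs, i.e. a predicate S on L x N that is down-closed,
   closed under joins in each variable separately, and saturated for the
   balancing relation.  This is the standard concrete model of the tensor
   product of sup-lattices (with balancing) and, for frames, of the frame
   coproduct / pushout, i.e. of the fibred product of locales. *)


Record Frame := {
  fcar :> Type;
  le : fcar -> fcar -> Prop;
  sup : (fcar -> Prop) -> fcar;
  meet : fcar -> fcar -> fcar;
  le_refl : forall x, le x x;
  le_trans : forall x y z, le x y -> le y z -> le x z;
  le_antisym : forall x y, le x y -> le y x -> x = y;
  sup_ub : forall (S : fcar -> Prop) x, S x -> le x (sup S);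
  sup_least : forall (S : fcar -> Prop) y, (forall x, S x -> le x y) -> le (sup S) y;
  meet_glb : forall x y z, le z (meet x y) <-> (le z x /\ le z y);
  meet_sup : forall x (S : fcar -> Prop),
      meet x (sup S) = sup (fun y => exists s, S s /\ y = meet x s)
}.

Arguments le {f} _ _.
Arguments sup {f} _.
Arguments meet {f} _ _.

Definition top (F : Frame) : F := sup (fun _ : F => True).

Definition img {X Y : Type} (f : X -> Y) (P : X -> Prop) : Y -> Prop :=
  fun y => exists x, P x /\ y = f x.

Definition sup_hom {L N : Frame} (f : L -> N) : Prop :=
  forall P : L -> Prop, f (sup P) = sup (img f P).

Definition frame_hom {L N : Frame} (f : L -> N) : Prop :=
  sup_hom f /\ (forall x y, f (meet x y) = meet (f x) (f y)) /\ f (top L) = top N.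

(* f^* : M -> X is the inverse image of an open map with direct image g *)
Definition open_inverse_image {M X : Frame} (fstar : M -> X) (fshriek : X -> M) : Prop :=
  frame_hom fstar /\
  (forall x m, le (fshriek x) m <-> le x (fstar m)) /\
  (forall x m, fshriek (meet x (fstar m)) = meet (fshriek x) m).

Definition open_surjection {M X : Frame} (fstar : M -> X) : Prop :=
  (exists fshriek : X -> M, open_inverse_image fstar fshriek) /\
  (forall m m', fstar m = fstar m' -> m = m').

Section Tensor.
Variables (L N : Frame) (B : L -> N -> L -> N -> Prop).

Definition tclosed (S : L -> N -> Prop) : Prop :=
  (forall l n l' n', S l n -> le l' l -> le n' n -> S l' n') /\
  (forall (P : L -> Prop) n, (forall l, P l -> S l n) -> S (sup P) n) /\
  (forall l (P : N -> Prop), (forall n, P n -> S l n) -> S l (sup P)) /\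
  (forall l n l' n', B l n l' n' -> (S l n <-> S l' n')).

Definition tgen (R : L -> N -> Prop) : L -> N -> Prop :=
  fun l n => forall T, tclosed T -> (forall l' n', R l' n' -> T l' n') -> T l n.

Definition tpure (l : L) (n : N) : L -> N -> Prop :=
  tgen (fun l' n' => l' = l /\ n' = n).

Definition tjoin (F : (L -> N -> Prop) -> Prop) : L -> N -> Prop :=
  tgen (fun l n => exists S, F S /\ S l n).

Definition tmeet (S T : L -> N -> Prop) : L -> N -> Prop :=
  fun l n => S l n /\ T l n.

Definition ttop : L -> N -> Prop := fun _ _ => True.

Definition teq (S T : L -> N -> Prop) : Prop := forall l n, S l n <-> T l n.

Definition frame_hom_into (Y : Frame) (f : Y -> L -> N -> Prop) : Prop :=
  (forall y, tclosed (f y)) /\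
  (forall P : Y -> Prop, teq (f (sup P)) (tjoin (img f P))) /\
  (forall x y, teq (f (meet x y)) (tmeet (f x) (f y))) /\
  teq (f (top Y)) ttop.

End Tensor.

Arguments tclosed {L N} B S.
Arguments tgen {L N} B R _ _.
Arguments tpure {L N} B l n _ _.
Arguments tjoin {L N} B F _ _.
Arguments tmeet {L N} S T _ _.
Arguments ttop {L N} _ _.
Arguments teq {L N} S T.
Arguments frame_hom_into {L N} B {Y} f.

Definition tensor_hom {L N L' N' : Frame}
    (B : L -> N -> L -> N -> Prop) (B' : L' -> N' -> L' -> N' -> Prop)
    (h : (L -> N -> Prop) -> (L' -> N' -> Prop)) : Prop :=
  (forall S, tclosed B S -> tclosed B' (h S)) /\
  (forall S T, tclosed B S -> tclosed B T -> teq S T -> teq (h S) (h T)) /\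
  (forall F, (forall S, F S -> tclosed B S) -> teq (h (tjoin B F)) (tjoin B' (img h F))) /\
  (forall S T, tclosed B S -> tclosed B T -> teq (h (tmeet S T)) (tmeet (h S) (h T))) /\
  teq (h ttop) ttop.

Definition tensor_iso {L N L' N' : Frame}
    (B : L -> N -> L -> N -> Prop) (B' : L' -> N' -> L' -> N' -> Prop)
    (h : (L -> N -> Prop) -> (L' -> N' -> Prop)) : Prop :=
  tensor_hom B B' h /\
  exists g : (L' -> N' -> Prop) -> (L -> N -> Prop),
    tensor_hom B' B g /\
    (forall S, tclosed B S -> teq (g (h S)) S) /\
    (forall T, tclosed B' T -> teq (h (g T)) T).

Record QData (A : Frame) := {
  Qf :> Frame;
  qmul : Qf -> Qf -> Qf;
  qinv : Qf -> Qf;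
  qlact : A -> Qf -> Qf;
  qract : Qf -> A -> Qf;
  qsupp : Qf -> A;
  qups : Qf -> A
}.

Arguments qmul {A q} _ _.
Arguments qinv {A q} _.
Arguments qlact {A q} _ _.
Arguments qract {A q} _ _.
Arguments qsupp {A q} _.
Arguments qups {A q} _.

Section GQ.
Variables (A : Frame) (Q : QData A).

(* balancing relation of Q (x)_A Q:  (x <| a) (x) y = x (x) (a |> y) *)
Definition BQQ (l n l' n' : Q) : Prop :=
  exists a : A, l = qract l' a /\ n' = qlact a n.

Definition qmu (S : Q -> Q -> Prop) : Q :=
  sup (fun z => exists x y, S x y /\ z = qmul x y).

Definition qmu_radj (q : Q) : Q -> Q -> Prop :=
  tjoin BQQ (fun T => tclosed BQQ T /\ le (qmu T) q).

Definition is_groupoid_quantale : Prop :=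
  (forall x y z : Q, qmul (qmul x y) z = qmul x (qmul y z)) /\
  (forall (x : Q) (P : Q -> Prop), qmul x (sup P) = sup (img (qmul x) P)) /\
  (forall (P : Q -> Prop) (y : Q), qmul (sup P) y = sup (img (fun x => qmul x y) P)) /\
  (forall x : Q, qinv (qinv x) = x) /\
  (forall x y : Q, qinv (qmul x y) = qmul (qinv y) (qinv x)) /\
  (forall P : Q -> Prop, qinv (sup P) = sup (img qinv P)) /\
  (forall (a : A) (P : Q -> Prop), qlact a (sup P) = sup (img (qlact a) P)) /\
  (forall (P : A -> Prop) (q : Q), qlact (sup P) q = sup (img (fun a => qlact a q) P)) /\
  (forall (q : Q) (P : A -> Prop), qract q (sup P) = sup (img (qract q) P)) /\
  (forall (P : Q -> Prop) (a : A), qract (sup P) a = sup (img (fun q => qract q a) P)) /\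
  (forall (a b : A) (q : Q), qlact (meet a b) q = qlact a (qlact b q)) /\
  (forall (a b : A) (q : Q), qract q (meet a b) = qract (qract q a) b) /\
  (forall (a b : A) (q : Q), qract (qlact a q) b = qlact a (qract q b)) /\
  (forall (a : A) (x y : Q), qmul (qlact a x) y = qlact a (qmul x y)) /\
  (forall (a : A) (x y : Q), qmul (qract x a) y = qmul x (qlact a y)) /\
  (forall (a : A) (x y : Q), qract (qmul x y) a = qmul x (qract y a)) /\
  (forall (a b : A) (x : Q), qinv (qract (qlact a x) b) = qract (qlact b (qinv x)) a) /\
  (forall (a : A) (q m : Q), meet (qlact a q) m = qlact a (meet q m)) /\
  (forall (a : A) (q m : Q), meet m (qract q a) = qract (meet q m) a) /\
  sup_hom (@qsupp A Q) /\
  qsupp (top Q) = top A /\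
  (forall x y : Q, le (qlact (qsupp x) y) (qmul (qmul x (qinv x)) y)) /\
  (forall x : Q, qlact (qsupp x) x = x) /\
  (forall (a : A) (x : Q), qsupp (qlact a x) = meet a (qsupp x)) /\
  frame_hom (@qups A Q) /\
  (forall a : A, qups (qlact a (top Q)) = a /\ qups (qract (top Q) a) = a) /\
  (forall P : Q -> Prop, teq (qmu_radj (sup P)) (tjoin BQQ (img qmu_radj P))) /\
  (forall a : Q, sup (fun z => exists x y, le (qmul x y) a /\ z = qlact (qups x) y) = a) /\
  (forall a : Q, qlact (qups a) (top Q) = sup (fun x => le (qmul x (qinv x)) a)).

Record XData := {
  Xf :> Frame;
  xact : Q -> Xf -> Xf;
  xlact : A -> Xf -> Xf;
  xinner : Xf -> Xf -> Q;
  xsupp : Xf -> A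
}.

Arguments xact {_} _ _.

Variable X : XData.

Definition is_Qmodule : Prop :=
  (forall (q : Q) (P : X -> Prop), xact q (sup P) = sup (img (xact q) P)) /\
  (forall (P : Q -> Prop) (x : X), xact (sup P) x = sup (img (fun q => xact q x) P)) /\
  (forall (p q : Q) (x : X), xact (qmul p q) x = xact p (xact q x)) /\
  (forall (a : A) (P : X -> Prop), xlact X a (sup P) = sup (img (xlact X a) P)) /\
  (forall (P : A -> Prop) (x : X), xlact X (sup P) x = sup (img (fun a => xlact X a x) P)) /\
  (forall (a b : A) (x : X), xlact X (meet a b) x = xlact X a (xlact X b x)) /\
  (forall x : X, xlact X (top A) x = x) /\
  (forall (a : A) (q : Q) (x : X), xact (qlact a q) x = xlact X a (xact q x)) /\
  (forall (a : A) (q : Q) (x : X), xact (qract q a) x = xact q (xlact X a x)) /\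
  (forall (a : A) (x y : X), xlact X a (meet x y) = meet (xlact X a x) y).

Definition is_preHilbert : Prop :=
  (forall (q : Q) (x y : X), xinner X (xact q x) y = qmul q (xinner X x y)) /\
  (forall (a : A) (x : X), qlact a (xinner X x (top X)) = xinner X (xlact X a x) (top X)) /\
  (forall (P : X -> Prop) (y : X),
      xinner X (sup P) y = sup (img (fun x => xinner X x y) P)) /\
  (forall x y : X, xinner X x y = qinv (xinner X y x)).

Definition is_stably_supported : Prop :=
  is_Qmodule /\ is_preHilbert /\
  (forall x y : X, le x y -> le (xsupp X x) (xsupp X y)) /\
  xsupp X (top X) = top A /\
  (forall x : X, le (xlact X (xsupp X x) (top X)) (xact (xinner X x x) (top X))) /\
  (forall x : X, xlact X (xsupp X x) x = x) /\
  (forall (q : Q) (x : X), le (xsupp X (xact q x)) (qsupp q)).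

(* balancing relation of Q (x)_A X:  (q <| a) (x) x = q (x) (a |> x) *)
Definition BQX (l : Q) (n : X) (l' : Q) (n' : X) : Prop :=
  exists a : A, l = qract l' a /\ n' = xlact X a n.

(* alpha_* (x) = \/_{q . y <= x} q (x) y ; this is also a_X^* *)
Definition alpha_star (x : X) : Q -> X -> Prop :=
  tjoin BQX (fun T => exists q y, le (xact q y) x /\ T = tpure BQX q y).

Definition is_Qlocale : Prop :=
  is_stably_supported /\
  (forall P : X -> Prop, teq (alpha_star (sup P)) (tjoin BQX (img alpha_star P))) /\
  (forall x : X,
      sup (fun z => exists q y, le (xact q y) x /\ z = xlact X (qups q) y) = x).

(* balancing relation of X (x)_M X along pi^* *)
Definition BXX (M : Frame) (pistar : M -> X) (l n l' n' : X) : Prop :=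
  exists m : M, l = meet l' (pistar m) /\ n' = meet n (pistar m).

Definition phi_pure (x y : X) : Q -> X -> Prop :=
  tjoin BQX (fun T => exists q z, le (xact q z) x /\ T = tpure BQX q (meet z y)).

Definition phi_map (S : X -> X -> Prop) : Q -> X -> Prop :=
  tjoin BQX (fun T => exists x y, S x y /\ T = phi_pure x y).

Definition is_principal_Qlocale (M : Frame) (pistar : M -> X) (stilde : X -> M) : Prop :=
  is_Qlocale /\
  open_inverse_image pistar stilde /\ stilde (top X) = top M /\
  (forall (q : Q) (x : X), stilde (xact q x) = stilde (xlact X (qsupp (qinv q)) x)) /\
  tensor_iso (BXX M pistar) BQX phi_map.

(*   O(G1) = Q, O(G0) = A, d^* a = a |> 1, r^* a = 1 <| a, u^* = upsilon, *)
(*   O(G1 x_{G0} X) = Q (x)_A X, O(G1 x_{G0} G1 x_{G0} X) = Q (x)_A Q (x)_A X, *)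
(*   m^* = right adjoint of the multiplication Q (x)_A Q -> Q.          *)

Definition tclosed3 (S : Q -> Q -> X -> Prop) : Prop :=
  (forall q1 q2 x q1' q2' x', S q1 q2 x -> le q1' q1 -> le q2' q2 -> le x' x ->
     S q1' q2' x') /\
  (forall (P : Q -> Prop) q2 x, (forall q1, P q1 -> S q1 q2 x) -> S (sup P) q2 x) /\
  (forall q1 (P : Q -> Prop) x, (forall q2, P q2 -> S q1 q2 x) -> S q1 (sup P) x) /\
  (forall q1 q2 (P : X -> Prop), (forall x, P x -> S q1 q2 x) -> S q1 q2 (sup P)) /\
  (forall (a : A) q1 q2 x, S (qract q1 a) q2 x <-> S q1 (qlact a q2) x) /\
  (forall (a : A) q1 q2 x, S q1 (qract q2 a) x <-> S q1 q2 (xlact X a x)).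

Definition tgen3 (R : Q -> Q -> X -> Prop) : Q -> Q -> X -> Prop :=
  fun q1 q2 x => forall T, tclosed3 T -> (forall a b c, R a b c -> T a b c) -> T q1 q2 x.

Definition teq3 (S T : Q -> Q -> X -> Prop) : Prop :=
  forall q1 q2 x, S q1 q2 x <-> T q1 q2 x.

(* (id x a)^* : Q (x) X -> Q (x) Q (x) X,  q (x) y |-> q (x) a^*(y) *)
Definition id_x_act (astar : X -> Q -> X -> Prop) (S : Q -> X -> Prop) : Q -> Q -> X -> Prop :=
  tgen3 (fun q1 q2 z => exists y, S q1 y /\ astar y q2 z).

(* (m x id)^* : Q (x) X -> Q (x) Q (x) X,  q (x) y |-> m^*(q) (x) y *)
Definition mul_x_id (S : Q -> X -> Prop) : Q -> Q -> X -> Prop :=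
  tgen3 (fun q1 q2 z => exists q, S q z /\ qmu_radj q q1 q2).

(* (X, p, a) is a G(Q)-locale, given by the inverse images p^*, a^* *)
Definition is_GQ_locale (pstar : A -> X) (astar : X -> Q -> X -> Prop) : Prop :=
  frame_hom pstar /\
  frame_hom_into BQX astar /\
  (forall b : A, teq (astar (pstar b)) (tpure BQX (qlact b (top Q)) (top X))) /\
  (* associativity  a o (id x a) = a o (m x id) *)
  (forall x : X, teq3 (id_x_act astar (astar x)) (mul_x_id (astar x))) /\
  (* unitality  a o <u o p, id> = id *)
  (forall x : X,
      sup (fun z => exists q y, astar x q y /\ z = meet (pstar (qups q)) y) = x).

Definition is_fully_open_principal_GQ_bundle (M : Frame)
    (pstar : A -> X) (astar : X -> Q -> X -> Prop) (pistar : M -> X) : Prop :=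
  is_GQ_locale pstar astar /\
  (* pi o a = pi o pi_2 *)
  (forall m : M, teq (astar (pistar m)) (tpure BQX (top Q) (pistar m))) /\
  (* <a, pi_2> : G1 x_{G0} X -> X x_M X is an isomorphism of locales;
     its inverse image sends x (x) y to a^*(x) /\ pi_2^*(y) *)
  tensor_iso (BXX M pistar) BQX
    (fun S => tjoin BQX (fun T => exists x y, S x y /\
                 T = tmeet (astar x) (tpure BQX (top Q) y))) /\
  open_surjection pistar /\
  open_surjection pstar.

End GQ.

Arguments XData {A} Q.
Arguments Xf {A Q} _.
Arguments xact {A Q} _ _ _.
Arguments xlact {A Q} _ _ _.
Arguments xinner {A Q} _ _ _.
Arguments xsupp {A Q} _ _.
Arguments is_groupoid_quantale {A} Q.
Arguments is_principal_Qlocale {A Q} X M pistar stilde.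
Arguments alpha_star {A Q} X x _ _.
Arguments is_fully_open_principal_GQ_bundle {A Q} X M pstar astar pistar.

(* Main.v *)
Require Import Defs.
From Stdlib Require Import Setoid.

Section FrameLemmas.
Variable F : Frame.

Lemma meet_l (x y : F) : le (meet x y) x.
Proof. apply (proj1 (meet_glb F x y (meet x y)) (le_refl F _)). Qed.
Lemma meet_r (x y : F) : le (meet x y) y.
Proof. apply (proj1 (meet_glb F x y (meet x y)) (le_refl F _)). Qed.
Lemma meet_intro (x y z : F) : le z x -> le z y -> le z (meet x y).
Proof. intros; apply (proj2 (meet_glb F x y z)); auto. Qed.
Lemma meet_comm (x y : F) : meet x y = meet y x.
Proof. apply le_antisym; apply meet_intro; auto using meet_l, meet_r. Qed.
Lemma top_max (x : F) : le x (top F).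
Proof. unfold top. apply sup_ub. exact I. Qed.
Lemma meet_top_l (x : F) : meet (top F) x = x.
Proof. apply le_antisym. apply meet_r. apply meet_intro; auto using top_max, le_refl. Qed.
Lemma meet_top_r (x : F) : meet x (top F) = x.
Proof. rewrite meet_comm; apply meet_top_l. Qed.
Lemma meet_le_eq (x y : F) : le x y -> meet x y = x.
Proof. intros; apply le_antisym. apply meet_l. apply meet_intro; auto using le_refl. Qed.
Lemma meet_mono (x y x' y' : F) : le x x' -> le y y' -> le (meet x y) (meet x' y').
Proof. intros; apply meet_intro. eapply le_trans; [apply meet_l|auto]. eapply le_trans; [apply meet_r|auto]. Qed.
Lemma sup_ext (P P' : F -> Prop) : (forall z, P z <-> P' z) -> sup P = sup P'.
Proof.
  intros H; apply le_antisym; apply sup_least; intros; apply sup_ub; apply H; auto.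
Qed.
Lemma sup_pair (x y : F) : le x y -> sup (fun z => z = x \/ z = y) = y.
Proof.
  intros H; apply le_antisym.
  - apply sup_least; intros z [->| ->]; auto using le_refl.
  - apply sup_ub; auto.
Qed.
Lemma sup_le_img {G : Frame} (f : G -> F) (P : G -> Prop) (y : F) :
  (forall x, P x -> le (f x) y) -> le (sup (img f P)) y.
Proof. intros H; apply sup_least; intros z [x [Hx ->]]; auto. Qed.
End FrameLemmas.

Lemma mono_of_sup {L N : Frame} (f : L -> N) :
  (forall P, f (sup P) = sup (img f P)) -> forall x y, le x y -> le (f x) (f y).
Proof.
  intros Hf x y Hxy. rewrite <- (sup_pair L x y Hxy), Hf.
  apply sup_ub. exists x; auto.
Qed.

Lemma mono_of_sup2 {L N : Frame} (f : L -> N) :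
  sup_hom f -> forall x y, le x y -> le (f x) (f y).
Proof. intro H; apply mono_of_sup; exact H. Qed.

Section TensorLemmas.
Variables (L N : Frame) (B : L -> N -> L -> N -> Prop).

Lemma tgen_closed (R : L -> N -> Prop) : tclosed B (tgen B R).
Proof.
  unfold tgen; split; [|split; [|split]].
  - intros l n l' n' H H1 H2 T HT HR. apply (proj1 HT l n); auto; apply H; auto.
  - intros P n H T HT HR. apply (proj1 (proj2 HT)); intros; apply H; auto.
  - intros l P H T HT HR. apply (proj1 (proj2 (proj2 HT))); intros; apply H; auto.
  - intros l n l' n' Hb0; split; intros H T HT HR; pose proof (proj2 (proj2 (proj2 HT))) as Hb.
    + apply (proj1 (Hb _ _ _ _ Hb0)); apply H; auto.
    + apply (proj2 (Hb _ _ _ _ Hb0)); apply H; auto.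
Qed.

Lemma tgen_incl (R : L -> N -> Prop) l n : R l n -> tgen B R l n.
Proof. intros H T _ HR; auto. Qed.

Lemma tgen_least (R T : L -> N -> Prop) : tclosed B T ->
  (forall l n, R l n -> T l n) -> forall l n, tgen B R l n -> T l n.
Proof. intros HT HR l n H; apply H; auto. Qed.

Lemma tgen_ext (R R' : L -> N -> Prop) : (forall l n, R l n <-> R' l n) ->
  teq (tgen B R) (tgen B R').
Proof.
  intros H l n; split; apply tgen_least; try apply tgen_closed;
  intros; apply tgen_incl; apply H; auto.
Qed.

Lemma tgen_eq_closed (R T : L -> N -> Prop) : tclosed B T ->
  (forall l n, R l n -> T l n) -> (forall l n, T l n -> tgen B R l n) -> teq (tgen B R) T.
Proof. intros HT H1 H2 l n; split; auto. apply tgen_least; auto. Qed.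

Lemma tclosed_teq (S T : L -> N -> Prop) : teq S T -> tclosed B S -> tclosed B T.
Proof.
  intros E [D [S1 [S2 Hb]]]; split; [|split; [|split]].
  - intros l n l' n' H H0 H1; apply E; apply (D l n); auto; apply E; auto.
  - intros P n H; apply E; apply S1; intros; apply E; auto.
  - intros l P H; apply E; apply S2; intros; apply E; auto.
  - intros l n l' n' Hb0; split; intros H; apply E.
    + apply (proj1 (Hb _ _ _ _ Hb0)); apply E; auto.
    + apply (proj2 (Hb _ _ _ _ Hb0)); apply E; auto.
Qed.

Lemma tmeet_closed (S T : L -> N -> Prop) : tclosed B S -> tclosed B T -> tclosed B (tmeet S T).
Proof.
  intros [D [S1 [S2 Hb]]] [D' [S1' [S2' Hb']]]; unfold tmeet; split; [|split; [|split]].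
  - intros l n l' n' [H H'] ? ?; split; [eapply D|eapply D']; eauto.
  - intros P n H; split; [apply S1|apply S1']; intros; apply H; auto.
  - intros l P H; split; [apply S2|apply S2']; intros; apply H; auto.
  - intros l n l' n' Hb0; split; intros [H H'].
    + split; [apply (proj1 (Hb _ _ _ _ Hb0))|apply (proj1 (Hb' _ _ _ _ Hb0))]; auto.
    + split; [apply (proj2 (Hb _ _ _ _ Hb0))|apply (proj2 (Hb' _ _ _ _ Hb0))]; auto.
Qed.

Lemma tpure_least (l0 : L) (n0 : N) (T : L -> N -> Prop) : tclosed B T -> T l0 n0 ->
  forall l n, tpure B l0 n0 l n -> T l n.
Proof. intros HT H0; apply tgen_least; auto. intros l n [-> ->]; auto. Qed.

Lemma tpure_self (l0 : L) (n0 : N) : tpure B l0 n0 l0 n0.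
Proof. apply tgen_incl; auto. Qed.

End TensorLemmas.

Lemma teq_sym {L N : Frame} (S T : L -> N -> Prop) : teq S T -> teq T S.
Proof. intros H l n; split; apply H. Qed.
Lemma teq_trans {L N : Frame} (S T U : L -> N -> Prop) : teq S T -> teq T U -> teq S U.
Proof. intros H1 H2 l n; split; intro; [apply H2, H1|apply H1, H2]; auto. Qed.

Lemma tensor_hom_ext {L N L' N' : Frame}
    (B : L -> N -> L -> N -> Prop) (B' : L' -> N' -> L' -> N' -> Prop)
    (h h' : (L -> N -> Prop) -> (L' -> N' -> Prop)) :
  (forall S, teq (h S) (h' S)) -> tensor_hom B B' h' -> tensor_hom B B' h.
Proof.
  intros E [T1 [T2 [T3 [T4 T5]]]]; split; [|split; [|split; [|split]]].
  - intros S HS. apply (tclosed_teq _ _ B' (h' S)); [apply teq_sym, E|auto].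
  - intros S T HS HT HST. eapply teq_trans; [apply E|].
    eapply teq_trans; [apply T2; eauto|apply teq_sym, E].
  - intros F HF. eapply teq_trans; [apply E|]. eapply teq_trans; [apply T3; auto|].
    apply tgen_ext. intros l n; split.
    + intros [S' [[S [HS ->]] HS']]. exists (h S); split; [exists S; auto|apply E; auto].
    + intros [S' [[S [HS ->]] HS']]. exists (h' S); split; [exists S; auto|apply E; auto].
  - intros S T HS HT. eapply teq_trans; [apply E|]. eapply teq_trans; [apply T4; auto|].
    intros l n; unfold tmeet; split; intros [? ?]; split; apply E; auto.
  - eapply teq_trans; [apply E|auto].
Qed.

Lemma tensor_iso_ext {L N L' N' : Frame}
    (B : L -> N -> L -> N -> Prop) (B' : L' -> N' -> L' -> N' -> Prop)
    (h h' : (L -> N -> Prop) -> (L' -> N' -> Prop)) :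
  (forall S, teq (h S) (h' S)) -> tensor_iso B B' h' -> tensor_iso B B' h.
Proof.
  intros E [Hh [g [Hg [G1 G2]]]]. split; [eapply tensor_hom_ext; eauto|].
  exists g; split; [auto|split].
  - intros S HS. eapply teq_trans; [|apply G1; auto].
    destruct Hg as [_ [Hg2 _]]. apply Hg2.
    + apply (tensor_hom_ext _ _ h h' E Hh); auto.
    + apply Hh; auto.
    + apply E.
  - intros T HT. eapply teq_trans; [apply E|]. apply G2; auto.
Qed.

Section Main.
Variables (A : Frame) (Q : QData A) (M : Frame) (X : XData Q)
  (pistar : M -> X) (stilde : X -> M).
Hypothesis HQ : is_groupoid_quantale Q.
Hypothesis HX : is_principal_Qlocale X M pistar stilde.

Ltac qax := destruct HQ as (Q1&Q2&Q3&Q4&Q5&Q6&Q7&Q8&Q9&Q10&Q11&Q12&Q13&Q14&Q15&Q16&Q17&Q18&Q19&Q20&Q21&Q22&Q23&Q24&Q25&Q26&Q27&Q28&Q29).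

Notation "1Q" := (top (Qf A Q)).
Notation "1X" := (top (Xf X)).

Lemma inv_mono (x y : Q) : le x y -> le (qinv x) (qinv y).
Proof. qax. apply mono_of_sup; auto. Qed.
Lemma lact_mono_q (a : A) (x y : Q) : le x y -> le (qlact a x) (qlact a y).
Proof. qax. apply mono_of_sup; auto. Qed.
Lemma lact_mono_a (a b : A) (x : Q) : le a b -> le (qlact a x) (qlact b x).
Proof. qax. apply (mono_of_sup (fun a => qlact a x)); auto. Qed.
Lemma ract_mono_q (a : A) (x y : Q) : le x y -> le (qract x a) (qract y a).
Proof. qax. apply (mono_of_sup (fun x => qract x a)); auto. Qed.
Lemma ract_mono_a (a b : A) (x : Q) : le a b -> le (qract x a) (qract x b).
Proof. qax. apply (mono_of_sup (qract x)); auto. Qed.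
Lemma mul_mono_r (x y z : Q) : le y z -> le (qmul x y) (qmul x z).
Proof. qax. apply (mono_of_sup (qmul x)); auto. Qed.
Lemma mul_mono_l (x y z : Q) : le y z -> le (qmul y x) (qmul z x).
Proof. qax. apply (mono_of_sup (fun y => qmul y x)); auto. Qed.
Lemma mul_mono (x y x' y' : Q) : le x x' -> le y y' -> le (qmul x y) (qmul x' y').
Proof. intros; eapply le_trans; [apply mul_mono_l|apply mul_mono_r]; eauto. Qed.
Lemma supp_mono (x y : Q) : le x y -> le (qsupp x) (qsupp y).
Proof. qax. apply mono_of_sup2; auto. Qed.

Lemma inv_top : qinv 1Q = 1Q.
Proof.
  qax. apply le_antisym. apply top_max.
  rewrite <- (Q4 1Q) at 1. apply inv_mono. apply top_max.
Qed.

Lemma lact_top (q : Q) : qlact (top A) q = q.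
Proof.
  qax. pose proof (Q18 (top A) 1Q q) as H.
  assert (E : qlact (top A) 1Q = 1Q) by (pose proof (Q23 1Q) as E; rewrite Q21 in E; exact E).
  rewrite E, !meet_top_l in H. symmetry; exact H.
Qed.

Lemma ract_meet1 (q : Q) (a : A) : qract q a = meet q (qract 1Q a).
Proof. qax. rewrite Q19. now rewrite meet_top_l. Qed.

Lemma ract_le (q : Q) (a : A) : le (qract q a) q.
Proof. rewrite ract_meet1. apply meet_l. Qed.

Lemma lact_le (q : Q) (a : A) : le (qlact a q) q.
Proof.
  qax. rewrite <- (meet_top_l _ q) at 1. rewrite <- Q18. apply meet_r.
Qed.

Lemma le_top_mul (u : Q) : le u (qmul 1Q u).
Proof.
  qax. pose proof (Q22 1Q u) as H. rewrite Q21, lact_top, inv_top in H.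
  eapply le_trans; [exact H|]. apply mul_mono_l. apply top_max.
Qed.

Lemma le_mul_top (u : Q) : le u (qmul u 1Q).
Proof.
  qax. pose proof (le_top_mul (qinv u)) as H. apply inv_mono in H.
  rewrite Q4, Q5, Q4, inv_top in H. exact H.
Qed.

Lemma ract_top1 : qract 1Q (top A) = 1Q.
Proof.
  qax. set (w := qract 1Q (top A)).
  assert (Hw1 : qmul w 1Q = qmul 1Q 1Q).
  { unfold w. rewrite Q15, lact_top. reflexivity. }
  assert (Hw2 : forall y, le (qmul y w) w).
  { intro y. unfold w. rewrite <- Q16. apply ract_mono_q. apply top_max. }
  assert (Hws : qinv w = w).
  { unfold w. pose proof (Q17 (top A) (top A) 1Q) as H.
    rewrite !lact_top, inv_top in H. exact H. }
  assert (H11 : qmul 1Q 1Q = qmul 1Q w).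
  { assert (E : qmul 1Q w = qinv (qmul w 1Q)) by (rewrite Q5, inv_top, Hws; reflexivity).
    rewrite E, Hw1, Q5, inv_top. reflexivity. }
  apply le_antisym. apply top_max.
  eapply le_trans. apply le_top_mul.
  eapply le_trans. apply le_top_mul.
  rewrite H11, <- Q1. apply Hw2.
Qed.

Lemma ract_top (q : Q) : qract q (top A) = q.
Proof. rewrite ract_meet1, ract_top1. apply meet_top_r. Qed.

Lemma inv_lact (a : A) (x : Q) : qinv (qlact a x) = qract (qinv x) a.
Proof.
  qax. pose proof (Q17 a (top A) x) as H. rewrite ract_top, lact_top in H. exact H.
Qed.

Lemma inv_ract (a : A) (x : Q) : qinv (qract x a) = qlact a (qinv x).
Proof.
  qax. rewrite <- (Q4 (qlact a (qinv x))). rewrite inv_lact, Q4. reflexivity.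
Qed.

Lemma ract_supp_inv (q : Q) : qract q (qsupp (qinv q)) = q.
Proof.
  qax. rewrite <- (Q4 q) at 1. rewrite <- inv_lact. rewrite Q23. apply Q4.
Qed.

Lemma supp_mul (u v : Q) : le (qsupp (qmul u v)) (qsupp u).
Proof.
  qax. rewrite <- (Q23 u) at 1. rewrite Q14, Q24. apply meet_l.
Qed.

Lemma le_lact_supp (q : Q) : le q (qlact (qsupp q) 1Q).
Proof.
  qax. rewrite <- (Q23 q) at 1. apply lact_mono_q. apply top_max.
Qed.

Lemma supp_ract_le (q z : Q) : le (qsupp (qract q (qsupp z))) (qsupp (qmul q z)).
Proof.
  qax. eapply le_trans; [apply supp_mono; apply le_mul_top|].
  rewrite Q15. eapply le_trans; [apply supp_mono; apply mul_mono_r; apply Q22|].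
  rewrite Q1, <- Q1. apply supp_mul.
Qed.


Ltac xax := destruct HX as (HQl & HP1 & HP1b & HP2 & HP3);
  destruct HQl as (HSS & Halpha & Hunit);
  destruct HSS as (HMod & HHil & Hmono & Hs1 & Hs2 & Hs3 & Hs4);
  destruct HMod as (X1&X2&X3&X4&X5&X6&X7&X8&X9&X10);
  destruct HHil as (H1&H2&H3&H4).

Lemma xact_mono_x (q : Q) (x y : X) : le x y -> le (xact X q x) (xact X q y).
Proof. xax. apply (mono_of_sup (xact X q)); auto. Qed.
Lemma xact_mono_q (q q' : Q) (x : X) : le q q' -> le (xact X q x) (xact X q' x).
Proof. xax. apply (mono_of_sup (fun q => xact X q x)); auto. Qed.
Lemma xlact_mono_x (a : A) (x y : X) : le x y -> le (xlact X a x) (xlact X a y).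
Proof. xax. apply (mono_of_sup (xlact X a)); auto. Qed.
Lemma xlact_mono_a (a b : A) (x : X) : le a b -> le (xlact X a x) (xlact X b x).
Proof. xax. apply (mono_of_sup (fun a => xlact X a x)); auto. Qed.
Lemma xlact_meet (a : A) (x : X) : xlact X a x = meet (xlact X a 1X) x.
Proof. xax. rewrite <- X10. now rewrite meet_top_l. Qed.
Lemma xlact_le (a : A) (x : X) : le (xlact X a x) x.
Proof. rewrite xlact_meet. apply meet_r. Qed.
Lemma inner_mono_l (x x' y : X) : le x x' -> le (xinner X x y) (xinner X x' y).
Proof. xax. apply (mono_of_sup (fun x => xinner X x y)); auto. Qed.
Lemma inner_mono_r (x y y' : X) : le y y' -> le (xinner X x y) (xinner X x y').
Proof.
  intro H. assert (HX' := HX). xax. rewrite (H4 x y), (H4 x y'). apply inv_mono.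
  apply inner_mono_l; auto.
Qed.
Lemma le_inner (x : X) : le x (xact X (xinner X x x) 1X).
Proof.
  assert (HX' := HX). xax. eapply le_trans; [|apply Hs2].
  rewrite <- (Hs3 x) at 1. apply xlact_mono_x. apply top_max.
Qed.
Lemma suppX_eq (x : X) : xsupp X x = qsupp (xinner X x 1X).
Proof.
  assert (HX' := HX). xax. qax. apply le_antisym.
  - eapply le_trans. apply Hmono. apply le_inner.
    eapply le_trans. apply Hs4. apply supp_mono. apply inner_mono_r. apply top_max.
  - rewrite <- (Hs3 x) at 1. rewrite <- H2. rewrite Q24. apply meet_l.
Qed.

Definition Dset (x : X) : Q -> X -> Prop := fun q y => le (xact X q y) x.

Lemma Dset_closed (x : X) : tclosed (BQX A Q X) (Dset x).
Proof.
  assert (HX' := HX). xax. unfold Dset; split; [|split; [|split]].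
  - intros l n l' n' H Hl Hn. eapply le_trans; [|exact H].
    eapply le_trans; [apply xact_mono_q; exact Hl|]. apply xact_mono_x; auto.
  - intros P n H. rewrite X2. apply sup_le_img. auto.
  - intros l P H. rewrite X1. apply sup_le_img. auto.
  - intros l n l' n' [a [-> ->]]. rewrite X9. tauto.
Qed.

Lemma alpha_char (x : X) q y : alpha_star X x q y <-> le (xact X q y) x.
Proof.
  split.
  - intro H0. refine (tgen_least _ _ _ _ (Dset x) (Dset_closed x) _ q y H0).
    intros l n [S [[q' [y' [Hle ->]]] HS]].
    exact (tpure_least _ _ _ q' y' (Dset x) (Dset_closed x) Hle l n HS).
  - intro H. apply tgen_incl. exists (tpure (BQX A Q X) q y). split.
    + exists q, y; auto.
    + apply tpure_self.
Qed.


Lemma comp_a : frame_hom (fun a : A => xlact X a 1X).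
Proof.
  assert (HX' := HX). xax. split; [|split].
  - intro P. apply X5.
  - intros a b. rewrite X6. apply xlact_meet.
  - apply X7.
Qed.

Lemma comp_b : frame_hom_into (BQX A Q X) (alpha_star X).
Proof.
  assert (HX' := HX). xax. split; [|split; [|split]].
  - intro y. apply tgen_closed.
  - exact Halpha.
  - intros x y l n. unfold tmeet. rewrite !alpha_char. apply meet_glb.
  - intros l n. rewrite alpha_char. split; [intros _; exact I|intros _; apply top_max].
Qed.

Lemma comp_c (b : A) : teq (alpha_star X (xlact X b 1X)) (tpure (BQX A Q X) (qlact b 1Q) 1X).
Proof.
  assert (HX' := HX). xax. qax. intros q y; split.
  - rewrite alpha_char. intros Hqy T HT HR.
    set (a := qsupp (xinner X y 1X)).
    assert (Ey : xlact X a y = y) by (unfold a; rewrite <- suppX_eq; apply Hs3).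
    assert (Hb := proj2 (proj2 (proj2 HT)) (qract q a) y q (xlact X a y)
                   (ex_intro _ a (conj eq_refl eq_refl))).
    assert (H0 : T q (xlact X a y)).
    { apply Hb. apply ((proj1 HT) (qlact b 1Q) 1X); [apply HR; auto| |apply top_max].
      eapply le_trans; [apply le_lact_supp|]. apply lact_mono_a.
      eapply le_trans; [apply supp_ract_le|]. rewrite <- H1.
      eapply le_trans; [apply supp_mono, inner_mono_l, Hqy|].
      rewrite <- H2, Q24. apply meet_l. }
    rewrite Ey in H0. exact H0.
  - apply tpure_least; [apply tgen_closed|]. apply alpha_char.
    rewrite X8. apply xlact_mono_x. apply top_max.
Qed.

Lemma tgen3_ext (R R' : Q -> Q -> X -> Prop) :
  (forall a b c, R a b c <-> R' a b c) -> teq3 A Q X (tgen3 A Q X R) (tgen3 A Q X R').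
Proof.
  intros E q1 q2 x; unfold tgen3; split; intros H T HT HR; apply H; auto;
  intros; apply HR; apply E; auto.
Qed.

Definition Rset (q : Q) : Q -> Q -> Prop := fun l n => le (qmul l n) q.

Lemma Rset_closed (q : Q) : tclosed (BQQ A Q) (Rset q).
Proof.
  qax. unfold Rset; split; [|split; [|split]].
  - intros l n l' n' H Hl Hn. eapply le_trans; [|exact H]. apply mul_mono; auto.
  - intros P n H. rewrite Q3. apply sup_le_img. auto.
  - intros l P H. rewrite Q2. apply sup_le_img. auto.
  - intros l n l' n' [a [-> ->]]. rewrite Q15. tauto.
Qed.

Lemma radj_char (q q1 q2 : Q) : qmu_radj A Q q q1 q2 <-> le (qmul q1 q2) q.
Proof.
  split.
  - intro H. refine (tgen_least _ _ _ _ (Rset q) (Rset_closed q) _ q1 q2 H).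
    intros l n [S [[HS Hle] HSln]]. unfold Rset. eapply le_trans; [|exact Hle].
    unfold qmu. apply sup_ub. exists l, n; auto.
  - intro H. apply tgen_incl. exists (Rset q). split; [split|exact H].
    + apply Rset_closed.
    + unfold qmu. apply sup_least. intros z [x [y [Hxy ->]]]. exact Hxy.
Qed.

Lemma comp_d (x : X) :
  teq3 A Q X (id_x_act A Q X (alpha_star X) (alpha_star X x)) (mul_x_id A Q X (alpha_star X x)).
Proof.
  assert (HX' := HX). xax. apply tgen3_ext. intros q1 q2 z; split.
  - intros [y [Hy Hz]]. rewrite alpha_char in Hy, Hz. exists (qmul q1 q2).
    rewrite alpha_char, radj_char. split; [|apply le_refl].
    rewrite X3. eapply le_trans; [apply xact_mono_x, Hz|exact Hy].
  - intros [q [Hq Hr]]. rewrite alpha_char in Hq. rewrite radj_char in Hr.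
    exists (xact X q2 z). rewrite !alpha_char. split; [|apply le_refl].
    rewrite <- X3. eapply le_trans; [apply xact_mono_q, Hr|exact Hq].
Qed.

Lemma comp_e (x : X) :
  sup (fun z => exists q y, alpha_star X x q y /\
        z = meet ((fun a : A => xlact X a 1X) (qups q)) y) = x.
Proof.
  assert (HX' := HX). xax. etransitivity; [|apply (Hunit x)]. apply sup_ext. intro z.
  split; intros [q [y [H ->]]]; exists q, y; rewrite alpha_char in *; split; auto;
  first [apply xlact_meet | symmetry; apply xlact_meet].
Qed.


Lemma comp_f (m : M) : teq (alpha_star X (pistar m)) (tpure (BQX A Q X) 1Q (pistar m)).
Proof.
  assert (HX' := HX). xax. qax. destruct HP1 as [Hfh [Hadj Hfrob]].
  intros q y; split.
  - rewrite alpha_char. intros Hqy T HT HR.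
    set (a := qsupp (qinv q)).
    assert (Hb := proj2 (proj2 (proj2 HT)) q y q (xlact X a y)
                   (ex_intro _ a (conj (eq_sym (ract_supp_inv q)) eq_refl))).
    apply Hb. apply ((proj1 HT) 1Q (pistar m)); [apply HR; auto|apply top_max|].
    apply Hadj. unfold a. rewrite <- HP2. apply Hadj. exact Hqy.
  - apply tpure_least; [apply tgen_closed|]. apply alpha_char.
    apply Hadj. rewrite HP2, inv_top, Q21, X7. apply Hadj. apply le_refl.
Qed.

Definition Fset (y : X) : Q -> X -> Prop :=
  fun q z => le (xlact X (qsupp (qinv q)) z) y.

Lemma Fset_closed (y : X) : tclosed (BQX A Q X) (Fset y).
Proof.
  assert (HX' := HX). xax. qax. unfold Fset; split; [|split; [|split]].
  - intros l n l' n' H Hl Hn. eapply le_trans; [|exact H].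
    eapply le_trans; [apply xlact_mono_a, supp_mono, inv_mono, Hl|].
    apply xlact_mono_x; auto.
  - intros P n H. rewrite Q6, Q20, X5. apply sup_le_img.
    intros a [w [[p [Hp ->]] ->]]. apply H; auto.
  - intros l P H. rewrite X4. apply sup_le_img. auto.
  - intros l n l' n' [a [-> ->]]. rewrite inv_ract, Q24, meet_comm, X6. tauto.
Qed.

Lemma key_teq (x y : X) :
  teq (tmeet (alpha_star X x) (tpure (BQX A Q X) 1Q y)) (phi_pure A Q X x y).
Proof.
  assert (HX' := HX). xax. qax. intros q z; split.
  - intros [Ha Hp]. rewrite alpha_char in Ha.
    assert (HF : Fset y q z).
    { refine (tpure_least _ _ _ 1Q y (Fset y) (Fset_closed y) _ q z Hp).
      unfold Fset. rewrite inv_top, Q21, X7. apply le_refl. }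
    unfold Fset in HF. set (c := qsupp (qinv q)) in HF.
    assert (Hcl := tgen_closed _ _ (BQX A Q X)
      (fun l n => exists S, (exists q z, le (xact X q z) x /\
         S = tpure (BQX A Q X) q (meet z y)) /\ S l n)).
    apply (proj2 (proj2 (proj2 Hcl)) q z q (xlact X c z)
             (ex_intro _ c (conj (eq_sym (ract_supp_inv q)) eq_refl))).
    apply tgen_incl. exists (tpure (BQX A Q X) q (meet (xlact X c z) y)). split.
    + exists q, (xlact X c z). split; auto. rewrite <- X9. unfold c.
      rewrite ract_supp_inv. exact Ha.
    + rewrite meet_le_eq; auto. apply tpure_self.
  - apply tgen_least. apply tmeet_closed; apply tgen_closed.
    intros l n [S [[q' [z' [Hle ->]]] HS]]. revert l n HS. apply tpure_least.
    + apply tmeet_closed; apply tgen_closed.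
    + split.
      * apply alpha_char. eapply le_trans; [|exact Hle]. apply xact_mono_x, meet_l.
      * apply (proj1 (tgen_closed _ _ _ _) 1Q y); [apply tpure_self|apply top_max|apply meet_r].
Qed.

Lemma comp_g : tensor_iso (BXX A Q X M pistar) (BQX A Q X)
    (fun S => tjoin (BQX A Q X) (fun T => exists x y, S x y /\
                 T = tmeet (alpha_star X x) (tpure (BQX A Q X) 1Q y))).
Proof.
  assert (HX' := HX). xax.
  apply (tensor_iso_ext _ _ _ (phi_map A Q X)); [|exact HP3].
  intro S. unfold phi_map. apply tgen_ext. intros l n; split.
  - intros [T [[x [y [HS ->]]] HT]]. exists (phi_pure A Q X x y). split.
    + exists x, y; auto.
    + apply key_teq; auto.
  - intros [T [[x [y [HS ->]]] HT]]. exists (tmeet (alpha_star X x) (tpure (BQX A Q X) 1Q y)).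
    split.
    + exists x, y; auto.
    + apply key_teq; auto.
Qed.

Lemma comp_h : open_surjection pistar.
Proof.
  assert (HX' := HX). xax. split; [exists stilde; exact HP1|].
  destruct HP1 as [Hfh [Hadj Hfrob]].
  assert (E : forall m, stilde (pistar m) = m).
  { intro m. rewrite <- (meet_top_l _ (pistar m)), Hfrob, HP1b. apply meet_top_l. }
  intros m m' H. rewrite <- (E m), <- (E m'), H. reflexivity.
Qed.

Lemma comp_i : open_surjection (fun a : A => xlact X a 1X).
Proof.
  assert (HX' := HX). xax. qax.
  assert (E : forall a, xsupp X (xlact X a 1X) = a).
  { intro a. rewrite !suppX_eq, <- H2, Q24, <- suppX_eq, Hs1. apply meet_top_r. }
  split.
  - exists (xsupp X). split; [apply comp_a|split].
    + intros x a; split; intro H.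
      * rewrite <- (Hs3 x). eapply le_trans; [apply xlact_mono_a, H|].
        apply xlact_mono_x, top_max.
      * rewrite <- (E a). apply Hmono; auto.
    + intros x a. rewrite meet_comm, <- xlact_meet, !suppX_eq, <- H2, Q24.
      apply meet_comm.
  - intros a b H. rewrite <- (E a), <- (E b), H. reflexivity.
Qed.

End Main.

Theorem lemma5p3 (A : Frame) (Q : QData A) (M : Frame) (X : XData Q)
    (pistar : M -> X) (stilde : X -> M) :
  is_groupoid_quantale Q ->
  is_principal_Qlocale X M pistar stilde ->
  is_fully_open_principal_GQ_bundle X M
    (fun a : A => xlact X a (top X)) (alpha_star X) pistar.
Proof.
  intros HQ HX.
  split; [split; [|split; [|split; [|split]]]|split; [|split; [|split]]].
  - eapply comp_a; eauto.
  - eapply comp_b; eauto.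
  - eapply comp_c; eauto.
  - eapply comp_d; eauto.
  - eapply comp_e; eauto.
  - eapply comp_f; eauto.
  - eapply comp_g; eauto.
  - eapply comp_h; eauto.
  - eapply comp_i; eauto.
Qed.
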